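(* Let $G=(V,E)$ be a finite Eulerian graph (every vertex has even degree; $G$ need not be connected). For $A\subseteq E$ let $\varepsilon(A)$ denote the number of Eulerian orientations of the graph $(V,A)$ and let $h(A)$ denote the number of half graphs of $(V,A)$. Then $$\varepsilon(G)^2=\sum_{A\subseteq E}\varepsilon(A)\,\varepsilon(E\setminus A)\qquad\text{and}\qquad h(G)^2=\sum_{A\subseteq E}h(A)\,h(E\setminus A),$$ where $\varepsilon(G)=\varepsilon(E)$ and $h(G)=h(E)$.
   Context: An Eulerian orientation of a graph is an orientation of its edges in which every vertex has in-degree equal to its out-degree. A half graph of a graph $F=(V,A)$ is a subset $S\subseteq A$ of edges such that for every vertex $v$ the number of edges of $S$ incident to $v$ equals $d_F(v)/2$, where $d_F(v)$ is the degree of $v$ in $F$. (If some vertex has odd degree in $(V,A)$, then $\varepsilon(A)=h(A)=0$.) *)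

(* Defs.v *)
From mathcomp Require Import all_boot.
Set Implicit Arguments. Unset Strict Implicit. Unset Printing Implicit Defensive.

(* A finite loopless multigraph: vertex type V, edge type E, each edge e has
   endpoints (src e, dst e) with src e <> dst e (the pair only fixes a
   reference direction, the graph itself is undirected). *)

Definition incident (V E : finType) (src dst : E -> V) (A : {set E}) (v : V)
  : {set E} := [set e in A | (src e == v) || (dst e == v)].

Definition deg (V E : finType) (src dst : E -> V) (A : {set E}) (v : V) : nat :=
  #|incident src dst A v|.

(* An orientation of (V,A): o e = true means e is directed src e -> dst e,
   false means dst e -> src e.  Values outside A are irrelevant, so we
   normalise them to false to count each orientation of A exactly once. *)
Definition outdeg (V E : finType) (src dst : E -> V) (A : {set E})
  (o : {ffun E -> bool}) (v : V) : nat :=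
  #|[set e in A | if o e then src e == v else dst e == v]|.

Definition indeg (V E : finType) (src dst : E -> V) (A : {set E})
  (o : {ffun E -> bool}) (v : V) : nat :=
  #|[set e in A | if o e then dst e == v else src e == v]|.

Definition eulerian_orientation (V E : finType) (src dst : E -> V)
  (A : {set E}) (o : {ffun E -> bool}) : bool :=
  [forall e, (e \notin A) ==> ~~ o e] &&
  [forall v, indeg src dst A o v == outdeg src dst A o v].

Definition n_eul_or (V E : finType) (src dst : E -> V) (A : {set E}) : nat :=
  #|[set o : {ffun E -> bool} | eulerian_orientation src dst A o]|.

(* half graph of (V,A): S subset of A with, for all v,
   #(edges of S incident to v) = d_A(v)/2 (written as 2 * ... = d_A(v),
   so there are none when some degree is odd, as in the paper). *)
Definition half_graph (V E : finType) (src dst : E -> V) (A S : {set E}) : bool :=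
  (S \subset A) && [forall v, (deg src dst S v).*2 == deg src dst A v].

Definition n_half (V E : finType) (src dst : E -> V) (A : {set E}) : nat :=
  #|[set S : {set E} | half_graph src dst A S]|.

(* Main.v *)
Require Import Defs.
From mathcomp Require Import all_boot.
Set Implicit Arguments. Unset Strict Implicit. Unset Printing Implicit Defensive.

Definition Ls (E : finType) (p q : E -> nat) (A X : {set E}) : nat :=
  \sum_e (if e \in A then (if e \in X then p e else q e) else 0).

Definition good (V E : finType) (p q : V -> E -> nat) (A X : {set E}) : bool :=
  (X \subset A) && [forall v, Ls (p v) (q v) A X == Ls (q v) (p v) A X].

Definition ng (V E : finType) (p q : V -> E -> nat) (A : {set E}) : nat :=
  \sum_X (good p q A X : nat).

Lemma forall_andb (T : finType) (a b : pred T) :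
  [forall v, a v] && [forall v, b v] = [forall v, a v && b v].
Proof.
apply/andP/forallP => [[/forallP Ha /forallP Hb] v|H]; first by rewrite Ha Hb.
by split; apply/forallP => v; case/andP: (H v).
Qed.

Definition sq (E : finType) (A X : {set E}) (F : E -> nat) (a x : bool) :=
  \sum_e (if ((e \in A) == a) && ((e \in X) == x) then F e else 0).

From mathcomp Require Import zify.
Lemma key (V E : finType) (p q : V -> E -> nat) (A X : {set E}) :
  good p q setT X && good p q setT ((X :&: A) :|: (~: X :&: ~: A)) =
  good p q A (X :&: A) && good p q (~: A) (X :\: A).
Proof.
rewrite /good !subsetT /= subsetIr.
have -> : X :\: A \subset ~: A by rewrite setDE subsetIr.
rewrite /= !forall_andb; apply: eq_forallb => v.
set P := p v; set Q := q v.
have E1 : forall P Q, Ls P Q setT X = sq A X P true true + sq A X Q true false + sq A X P false true + sq A X Q false false by move=> ? ?; rewrite /Ls /sq -!big_split; apply: eq_bigr => e _; rewrite !inE;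
  case: (e \in A); case: (e \in X); rewrite /= ?addn0 ?add0n.
have E2 : forall P Q, Ls P Q setT ((X :&: A) :|: (~: X :&: ~: A)) = sq A X P true true + sq A X Q true false + sq A X Q false true + sq A X P false false by move=> ? ?; rewrite /Ls /sq -!big_split; apply: eq_bigr => e _; rewrite !inE;
  case: (e \in A); case: (e \in X); rewrite /= ?addn0 ?add0n.
have E3 : forall P Q, Ls P Q A (X :&: A) = sq A X P true true + sq A X Q true false by move=> ? ?; rewrite /Ls /sq -!big_split; apply: eq_bigr => e _; rewrite !inE;
  case: (e \in A); case: (e \in X); rewrite /= ?addn0 ?add0n.
have E4 : forall P Q, Ls P Q (~: A) (X :\: A) = sq A X P false true + sq A X Q false false by move=> ? ?; rewrite /Ls /sq -!big_split; apply: eq_bigr => e _; rewrite !inE;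
  case: (e \in A); case: (e \in X); rewrite /= ?addn0 ?add0n.
rewrite !E1 !E2 !E3 !E4.
apply/idP/idP => /andP [/eqP H1 /eqP H2]; apply/andP; split; apply/eqP; lia.
Qed.

Lemma split_sum (E:finType) (A:{set E}) (gA gB : {set E} -> nat)
 (hA : forall Y, gA Y != 0 -> Y \subset A) (hB : forall Z, gB Z != 0 -> Z \subset ~: A) :
 \sum_X gA (X :&: A) * gB (X :\: A) = (\sum_Y gA Y) * (\sum_Z gB Z).
Proof.
rewrite big_distrlr /=.
rewrite pair_big /=.
pose s := fun (yz : {set E} * {set E}) => ((yz.1 :&: A) :|: (yz.2 :\: A), (yz.2 :&: A) :|: (yz.1 :\: A)).
have sK : involutive s.
  case=> Y Z; rewrite /s /=; congr (_,_); apply/setP => e; rewrite !inE;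
  by case: (e \in A); case: (e \in Y); case: (e \in Z).
rewrite (reindex_inj (inv_inj sK)) /=.
rewrite -(pair_big xpredT xpredT (fun X W => gA (s (X,W)).1 * gB (s (X,W)).2)) /=.
apply: eq_bigr => X _; rewrite (bigD1 set0) //= big1 ?addn0.
  by rewrite set0D set0I setU0 set0U.
move=> W /set0Pn [e eW]; apply/eqP; rewrite muln_eq0; case eA: (e \in A).
  apply/orP; right; apply: contraT => /hB /subsetP /(_ e).
  by rewrite !inE eW eA /= => /(_ isT).
apply/orP; left; apply: contraT => /hA /subsetP /(_ e).
by rewrite !inE eW eA /= orbT => /(_ isT).
Qed.

Lemma main_gen (V E : finType) (p q : V -> E -> nat) :
  (ng p q setT) ^ 2 = \sum_(A : {set E}) ng p q A * ng p q (~: A).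
Proof.
have inj : forall X1 : {set E}, injective (fun A => (X1 :&: A) :|: (~: X1 :&: ~: A)).
  move=> X1 A B /setP H; apply/setP => e; move: (H e); rewrite !inE.
  by case: (e \in X1); case: (e \in A); case: (e \in B).
rewrite -mulnn /ng big_distrlr /=.
under eq_bigr => X1 _ do rewrite (reindex_inj (inj X1)).
rewrite /= exchange_big /=; apply: eq_bigr => A _.
rewrite -(split_sum (A := A) (gA := fun Y => good p q A Y : nat) (gB := fun Z => good p q (~: A) Z : nat)).
- apply: eq_bigr => X _.
  by rewrite !mulnb key.
- by move=> Y; apply: contraR => /negbTE H; rewrite /good H.
- by move=> Y; apply: contraR => /negbTE H; rewrite /good H.
Qed.

Lemma card_sum (T : finType) (P : pred T) : #|[set x | P x]| = \sum_x (P x : nat).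
Proof.
rewrite -sum1_card big_mkcond; apply: eq_bigr => x _; rewrite inE; by case: (P x).
Qed.

Lemma half_ng (V E : finType) (src dst : E -> V) (A : {set E}) :
  n_half src dst A =
  ng (fun v e => ((src e == v) || (dst e == v) : nat)) (fun _ _ => 0) A.
Proof.
rewrite /n_half card_sum /ng; apply: eq_bigr => S _; congr nat_of_bool.
rewrite /half_graph /good; case sub: (S \subset A) => //=; apply: eq_forallb => v.
rewrite /deg /incident !card_sum.
set a := \sum_e _.
have h1 : a = Ls (fun e => ((src e == v) || (dst e == v) : nat)) (fun _ => 0) A S.
  apply: eq_bigr => e _; case eS: (e \in S); first by rewrite (subsetP sub e eS).
  by case: (e \in A).
have h2 : \sum_e ((e \in A) && ((src e == v) || (dst e == v)) : nat) =
   a + Ls (fun _ => 0) (fun e => ((src e == v) || (dst e == v) : nat)) A S.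
  rewrite /a /Ls -big_split; apply: eq_bigr => e _; case eS: (e \in S).
    by rewrite (subsetP sub e eS) /= addn0.
  by case: (e \in A).
by rewrite h2 -h1 -addnn eqn_add2l.
Qed.

Lemma eul_ng (V E : finType) (src dst : E -> V) (A : {set E}) :
  n_eul_or src dst A =
  ng (fun v e => (src e == v : nat)) (fun v e => (dst e == v : nat)) A.
Proof.
rewrite /n_eul_or card_sum /ng.
rewrite (reindex (fun X : {set E} => [ffun e => e \in X])) /=; last first.
  apply: onW_bij; exists (fun o : {ffun E -> bool} => [set e | o e]) => [X|o].
    by apply/setP => e; rewrite inE ffunE.
  by apply/ffunP => e; rewrite ffunE inE.
apply: eq_bigr => X _; congr nat_of_bool.
rewrite /eulerian_orientation /good; congr andb.
  apply/forallP/subsetP => H e.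
    move=> eX; move: (H e); rewrite ffunE eX; by case: (e \in A).
  rewrite ffunE; apply/implyP => eA; exact: contra (H e) eA.
apply: eq_forallb => v.
rewrite eq_sym; congr (_ == _); rewrite /outdeg /indeg card_sum /Ls;
  apply: eq_bigr => e _; rewrite ffunE /=; by case: (e \in A); case: (e \in X).
Qed.

Theorem theorem1p1 (V E : finType) (src dst : E -> V)
  (loopless : forall e, src e != dst e)
  (eulerian : forall v, ~~ odd (deg src dst [set: E] v)) :
  (n_eul_or src dst [set: E]) ^ 2 =
    \sum_(A : {set E}) n_eul_or src dst A * n_eul_or src dst (~: A)
  /\
  (n_half src dst [set: E]) ^ 2 =
    \sum_(A : {set E}) n_half src dst A * n_half src dst (~: A).
Proof.
split.
  rewrite eul_ng main_gen; apply: eq_bigr => A _; by rewrite !eul_ng.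
rewrite half_ng main_gen; apply: eq_bigr => A _; by rewrite !half_ng.
Qed.
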